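(* Let $N\ge1$, $\beta$ a non-negative integer and $\gamma$ a constant. For every $Q$ in the algebra $\mathcal{H}_0'$ and every $f\in\mathbb{C}[x_1,\dots,x_N]$, $$\sigma^B(Qf)=\rho^B(Q)\,\sigma^B(f).$$
   Context: On $\mathbb{C}[x]=\mathbb{C}[x_1,\dots,x_N]$: $s_{ij}$ swaps $x_i,x_j$; $D^A_j=\frac{\partial}{\partial x_j}+\beta\sum_{k\neq j}\frac{1-s_{jk}}{x_j-x_k}$; $\hat D^A_j=x_jD^A_j+\beta\sum_{k<j}s_{jk}$; $\mathcal{H}_0'$ is the operator algebra generated by the $\hat D^A_j$ and $s_{ij}$, and $\widetilde{\mathcal H}'$ the one generated by the $x_j$, $\hat D^A_j$, $s_{ij}$. On functions of $z=(z_1,\dots,z_N)$: $s_{ij}$ swaps $z_i,z_j$; $t_j$ sends $z_j\mapsto -z_j$; $D^B_j=\frac{\partial}{\partial z_j}+\beta\sum_{k\neq j}\left(\frac{1-s_{jk}}{z_j-z_k}+\frac{1-t_jt_ks_{jk}}{z_j+z_k}\right)+\gamma\frac{1-t_j}{z_j}$; $\tilde b^\dagger_j=\frac1{\sqrt2}(-D^B_j+2z_j)$, $\tilde b_j=\frac1{\sqrt2}D^B_j$; $\tilde h^B_j=\tilde b^\dagger_j\tilde b_j+\beta\sum_{k<j}(s_{jk}+t_jt_ks_{jk})$. The operators $(\tilde b^\dagger_j)^2$ and $\tilde h^B_j$ preserve $\mathbb{C}[z^2]=\mathbb{C}[z_1^2,\dots,z_N^2]$. $\rho^B$ is the representation of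 $\widetilde{\mathcal H}'$ on $\mathbb{C}[z^2]$ determined by $\rho^B(x_j)=\tfrac12(\tilde b^\dagger_j)^2$, $\rho^B(\hat D^A_j)=\tfrac12\tilde h^B_j$, $\rho^B(s_{ij})=s_{ij}$. The linear map $\sigma^B:\mathbb{C}[x]\to\mathbb{C}[z^2]$ is $\sigma^B(f)=f\big((\tilde b^\dagger_1)^2/2,\dots,(\tilde b^\dagger_N)^2/2\big)\cdot1$. *)

(* Defs.v *)
From HB Require Import structures.
From mathcomp Require Import all_boot all_order all_algebra.
From mathcomp Require Import all_fingroup mpoly.
From Stdlib Require Import ClassicalEpsilon.
Set Implicit Arguments. Unset Strict Implicit. Unset Printing Implicit Defensive.
Import Order.TTheory GRing.Theory Num.Theory.
Local Open Scope ring_scope.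

Section Ops.
Variables (C : numClosedFieldType) (N : nat) (beta : nat) (gamma : C).

Notation P := {mpoly C[N]}.

Definition exdiv (d p : P) : P := epsilon (inhabits 0) (fun q => d * q = p).

Definition sw (i j : 'I_N) (p : P) : P := msym (tperm i j) p.

Definition tflip (j : 'I_N) (p : P) : P :=
  p \mPo [tuple (if i == j then - 'X_i else 'X_i) | i < N].

Definition DA (j : 'I_N) (f : P) : P :=
  mderiv j f + beta%:R *: \sum_(k < N | k != j) exdiv ('X_j - 'X_k) (f - sw j k f).

Definition hatDA (j : 'I_N) (f : P) : P :=
  'X_j * DA j f + beta%:R *: \sum_(k < N | (k < j)%N) sw j k f.

Definition DB (j : 'I_N) (f : P) : P :=
  mderiv j f
  + beta%:R *: \sum_(k < N | k != j)
       (exdiv ('X_j - 'X_k) (f - sw j k f)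
        + exdiv ('X_j + 'X_k) (f - tflip j (tflip k (sw j k f))))
  + gamma *: exdiv 'X_j (f - tflip j f).

Definition bdag (j : 'I_N) (f : P) : P :=
  (sqrtC 2)^-1 *: (- DB j f + 2%:R *: ('X_j * f)).

Definition bann (j : 'I_N) (f : P) : P := (sqrtC 2)^-1 *: DB j f.

Definition hB (j : 'I_N) (f : P) : P :=
  bdag j (bann j f)
  + beta%:R *: \sum_(k < N | (k < j)%N) (sw j k f + tflip j (tflip k (sw j k f))).

(* rho^B(x_j) = (bdag_j)^2 / 2 *)
Definition bdag2half (j : 'I_N) (f : P) : P := 2%:R^-1 *: bdag j (bdag j f).

(* sigma^B f = f((bdag_1)^2/2, ..., (bdag_N)^2/2) . 1 *)
Definition mono_op (m : 'X_{1..N}) (g : P) : P :=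
  foldr (fun j acc => iter (m j) (bdag2half j) acc) g (enum 'I_N).

Definition sigmaB (f : P) : P := \sum_(m <- msupp f) f@_m *: mono_op m 1.

(* Elements of the algebra H_0' : formal expressions (linear combinations of
   products) in the generators hatD^A_j and s_ij. *)
Inductive H0expr : Type :=
| HgenD of 'I_N
| Hgens of 'I_N & 'I_N
| Hone
| Hadd of H0expr & H0expr
| Hscale of C & H0expr
| Hmul of H0expr & H0expr.

Fixpoint actA (e : H0expr) (f : P) : P :=
  match e with
  | HgenD j => hatDA j f
  | Hgens i j => sw i j f
  | Hone => f
  | Hadd a b => actA a f + actA b f
  | Hscale c a => c *: actA a f
  | Hmul a b => actA a (actA b f)
  end.

Fixpoint rhoB (e : H0expr) (g : P) : P :=
  match e with
  | HgenD j => 2%:R^-1 *: hB j g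
  | Hgens i j => sw i j g
  | Hone => g
  | Hadd a b => rhoB a g + rhoB b g
  | Hscale c a => c *: rhoB a g
  | Hmul a b => rhoB a (rhoB b g)
  end.

End Ops.

(* Main.v *)
Require Import Defs.
From HB Require Import structures.
From mathcomp Require Import all_boot all_order all_algebra.
From mathcomp Require Import all_fingroup mpoly.
From mathcomp.algebra_tactics Require Import ring.
From mathcomp Require Import zify.
From Stdlib Require Import ClassicalEpsilon.
Set Implicit Arguments. Unset Strict Implicit. Unset Printing Implicit Defensive.
Import Order.TTheory GRing.Theory Num.Theory.
Local Open Scope ring_scope.

Section Work.
Variables (C : numClosedFieldType) (N : nat) (beta : nat) (gamma : C).
Notation P := {mpoly C[N]}.
Notation X i := ('X_i : P).

Lemma exdivP (d p q : P) : d != 0 -> d * q = p -> exdiv d p = q.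
Proof.
move=> dn0 dq; rewrite /exdiv.
have := epsilon_spec (inhabits (0:P)) (fun q => d * q = p) (ex_intro _ q dq).
by move=> h; apply: (mulfI dn0); rewrite h dq.
Qed.

Lemma gen_ind (Q : P -> Prop) :
  (forall c, Q c%:MP) -> (forall i, Q (X i)) ->
  (forall p q, Q p -> Q q -> Q (p + q)) -> (forall p q, Q p -> Q q -> Q (p * q)) ->
  forall p, Q p.
Proof.
move=> hC hX hD hM p; rewrite [p]mpolyE.
apply: (big_ind Q); first by rewrite -mpolyC0.
  exact: hD.
move=> m _; rewrite -mul_mpolyC; apply: (hM _ _) => //.
rewrite mpolyXE_id; apply: (big_ind Q); first by rewrite -mpolyC1.
  exact: (hM).
move=> i _; set k := m i; elim: k => [|k ih]; first by rewrite expr0 -mpolyC1.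
by rewrite exprS; apply: (hM _ _).
Qed.

Lemma msize_leP (p : P) (d : nat) : (msize p <= d)%N <-> (forall m, (d <= mdeg m)%N -> p@_m = 0).
Proof.
split.
  move=> h m hm; apply/eqP; rewrite mcoeff_eq0; apply: msize_mdeg_ge.
  exact: leq_trans h hm.
move=> h; rewrite msizeE; apply/bigmax_leqP_seq => m mp _.
rewrite ltnNge; apply/negP => /h /eqP; by rewrite mcoeff_eq0 mp.
Qed.

Lemma msize0_eq0 (p : P) : (msize p <= 0)%N -> p = 0.
Proof.
move/msize_leP => h; apply/mpolyP => m; rewrite mcoeff0; exact: h.
Qed.

Lemma mcoeffXi (i : 'I_N) m : (X i)@_m = (U_(i)%MM == m)%:R.
Proof. by rewrite mcoeffX. Qed.

Lemma XsubX_neq0 (j k : 'I_N) : j != k -> X j - X k != 0.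
Proof.
move=> jk; apply/eqP => /(congr1 (mcoeff U_(j))).
by rewrite mcoeffB mcoeff0 !mcoeffXU eqxx eq_sym (negbTE jk) subr0 => /eqP; rewrite oner_eq0.
Qed.

Lemma XaddX_neq0 (j k : 'I_N) : j != k -> X j + X k != 0.
Proof.
move=> jk; apply/eqP => /(congr1 (mcoeff U_(j))).
by rewrite mcoeffD mcoeff0 !mcoeffXU eqxx eq_sym (negbTE jk) addr0 => /eqP; rewrite oner_eq0.
Qed.

Lemma X_neq0 (j : 'I_N) : X j != 0.
Proof.
apply/eqP => /(congr1 (mcoeff U_(j))).
by rewrite mcoeff0 !mcoeffXU eqxx => /eqP; rewrite oner_eq0.
Qed.


Lemma ext_morph (F G : P -> P) :
  (forall p q, F (p + q) = F p + F q) -> (forall p q, G (p + q) = G p + G q) ->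
  (forall p q, F (p * q) = F p * F q) -> (forall p q, G (p * q) = G p * G q) ->
  (forall c, F c%:MP = c%:MP) -> (forall c, G c%:MP = c%:MP) ->
  (forall i, F (X i) = G (X i)) -> forall p, F p = G p.
Proof.
move=> FD GD FM GM FC GC FX; apply: gen_ind => //.
- by move=> c; rewrite FC GC.
- by move=> p q hp hq; rewrite FD GD hp hq.
- by move=> p q hp hq; rewrite FM GM hp hq.
Qed.

Lemma sw_X (a b i : 'I_N) : sw a b (X i) = X (tperm a b i).
Proof. by rewrite /sw /msym mmapX mmap1U. Qed.

Lemma sw_C (a b : 'I_N) c : sw a b (c%:MP : P) = c%:MP.
Proof. by rewrite /sw /msym mmapC. Qed.

Lemma swD a b (p q : P) : sw a b (p + q) = sw a b p + sw a b q.
Proof. exact: msymD. Qed.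
Lemma swB a b (p q : P) : sw a b (p - q) = sw a b p - sw a b q.
Proof. exact: msymB. Qed.
Lemma swN a b (p : P) : sw a b (- p) = - sw a b p.
Proof. exact: msymN. Qed.
Lemma swM a b (p q : P) : sw a b (p * q) = sw a b p * sw a b q.
Proof. exact: msymM. Qed.
Lemma swZ a b c (p : P) : sw a b (c *: p) = c *: sw a b p.
Proof. exact: msymZ. Qed.
Lemma sw0 a b : sw a b (0 : P) = 0.
Proof. exact: msym0. Qed.
Lemma sw1 a b : sw a b (1 : P) = 1.
Proof. exact: msym1. Qed.
Lemma sw_sum a b (I : Type) (r : seq I) (Pr : pred I) (F : I -> P) :
  sw a b (\sum_(i <- r | Pr i) F i) = \sum_(i <- r | Pr i) sw a b (F i).
Proof. exact: (raddf_sum (msym (tperm a b))). Qed.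

Lemma swK a b (p : P) : sw a b (sw a b p) = p.
Proof. by rewrite /sw -msymMm tperm2 msym1m. Qed.

Lemma swC a b (p : P) : sw a b p = sw b a p.
Proof. by rewrite /sw tpermC. Qed.

Lemma sw_id a (p : P) : sw a a p = p.
Proof. by rewrite /sw tperm1 msym1m. Qed.

Lemma swJ (a b j k : 'I_N) (p : P) :
  sw a b (sw j k p) = sw (tperm a b j) (tperm a b k) (sw a b p).
Proof.
rewrite /sw -!msymMm; congr msym.
rewrite -tpermJ /conjg tpermV !mulgA tperm2 mul1g; done.
Qed.

Lemma tflip_X (j i : 'I_N) : tflip j (X i) = if i == j then - X i else X i.
Proof.
rewrite /tflip comp_mpolyXU -tnth_nth tnth_mktuple; done.
Qed.

Lemma tflip_C j c : tflip j (c%:MP : P) = c%:MP.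
Proof. by rewrite /tflip comp_mpolyC. Qed.
Lemma tflipD j (p q : P) : tflip j (p + q) = tflip j p + tflip j q.
Proof. exact: comp_mpolyD. Qed.
Lemma tflipB j (p q : P) : tflip j (p - q) = tflip j p - tflip j q.
Proof. exact: comp_mpolyB. Qed.
Lemma tflipM j (p q : P) : tflip j (p * q) = tflip j p * tflip j q.
Proof. exact: rmorphM. Qed.
Lemma tflipZ j c (p : P) : tflip j (c *: p) = c *: tflip j p.
Proof. exact: comp_mpolyZ. Qed.

Definition phi (g : P) : P := g \mPo [tuple (X i ^+ 2) | i < N].

Lemma phi_X i : phi (X i) = X i ^+ 2.
Proof. by rewrite /phi comp_mpolyXU -tnth_nth tnth_mktuple. Qed.
Lemma phi_C c : phi c%:MP = c%:MP.
Proof. by rewrite /phi comp_mpolyC. Qed.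
Lemma phiD (p q : P) : phi (p + q) = phi p + phi q.
Proof. exact: comp_mpolyD. Qed.
Lemma phiB (p q : P) : phi (p - q) = phi p - phi q.
Proof. exact: comp_mpolyB. Qed.
Lemma phiN (p : P) : phi (- p) = - phi p.
Proof. exact: comp_mpolyN. Qed.
Lemma phiM (p q : P) : phi (p * q) = phi p * phi q.
Proof. exact: rmorphM. Qed.
Lemma phiZ c (p : P) : phi (c *: p) = c *: phi p.
Proof. exact: comp_mpolyZ. Qed.
Lemma phi0 : phi 0 = 0.
Proof. exact: comp_mpoly0. Qed.
Lemma phi1 : phi 1 = 1.
Proof. exact: comp_mpoly1. Qed.
Lemma phi_sum (I : Type) (r : seq I) (Pr : pred I) (F : I -> P) :
  phi (\sum_(i <- r | Pr i) F i) = \sum_(i <- r | Pr i) phi (F i).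
Proof. exact: raddf_sum. Qed.

Lemma phi_sumo (Pr : pred 'I_N) (F : 'I_N -> P) :
  phi (\sum_(k < N | Pr k) F k) = \sum_(k < N | Pr k) phi (F k).
Proof. exact: phi_sum. Qed.

Lemma sw_phi a b (g : P) : sw a b (phi g) = phi (sw a b g).
Proof.
apply: (ext_morph (F := fun g => sw a b (phi g)) (G := fun g => phi (sw a b g))) => /=.
- by move=> p q; rewrite phiD swD.
- by move=> p q; rewrite swD phiD.
- by move=> p q; rewrite phiM swM.
- by move=> p q; rewrite swM phiM.
- by move=> c; rewrite phi_C sw_C.
- by move=> c; rewrite sw_C phi_C.
- by move=> i; rewrite phi_X sw_X phi_X expr2 swM sw_X.
Qed.

Lemma tflip_phi j (g : P) : tflip j (phi g) = phi g.
Proof.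
apply: (ext_morph (F := fun g => tflip j (phi g)) (G := phi)) => /=.
- by move=> p q; rewrite phiD tflipD.
- exact: phiD.
- by move=> p q; rewrite phiM tflipM.
- exact: phiM.
- by move=> c; rewrite phi_C tflip_C.
- exact: phi_C.
- move=> i; rewrite phi_X expr2 tflipM tflip_X; case: eqP => _ //; by rewrite mulrNN.
Qed.


Fact lock_key : unit. Proof. exact: tt. Qed.
Definition Dl : 'I_N -> 'I_N -> P -> P :=
  locked_with lock_key (fun j k f => exdiv (X j - X k) (f - sw j k f)).
Lemma DlE j k f : Dl j k f = exdiv (X j - X k) (f - sw j k f).
Proof. by rewrite /Dl unlock. Qed.
Definition S : 'I_N -> P -> P :=
  locked_with lock_key (fun j f => \sum_(k < N | k != j) sw j k f).
Definition A : 'I_N -> P -> P := locked_with lock_key (@DA C N beta).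
Lemma A_unlock : A = @DA C N beta.
Proof. by rewrite /A unlock. Qed.

Lemma DAE j f : A j f = mderiv j f + beta%:R *: \sum_(k < N | k != j) Dl j k f.
Proof.
rewrite A_unlock /DA; congr (_ + _ *: _); apply: eq_bigr => k _; by rewrite DlE.
Qed.

Lemma dvd_sw (j k : 'I_N) (f : P) : j != k -> exists q, f - sw j k f = (X j - X k) * q.
Proof.
move=> jk; move: f; apply: gen_ind.
- by move=> c; exists 0; rewrite sw_C subrr mulr0.
- move=> i; rewrite sw_X.
  case: (tpermP j k i) => [->|->|ij ik].
  + by exists 1; rewrite mulr1.
  + by exists (-1); rewrite mulrN1 opprB.
  + by exists 0; rewrite mulr0 subrr.
- by move=> p q [a ha] [b hb]; exists (a + b); rewrite swD mulrDr -ha -hb; ring.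
- move=> p q [a ha] [b hb]; exists (a * q + sw j k p * b); rewrite swM.
  have -> : p * q - sw j k p * sw j k q = (p - sw j k p) * q + sw j k p * (q - sw j k q) by ring.
  by rewrite ha hb; ring.
Qed.

Lemma DlP j k f : j != k -> (X j - X k) * Dl j k f = f - sw j k f.
Proof.
move=> jk; have [q hq] := dvd_sw f jk.
by rewrite DlE (exdivP (XsubX_neq0 jk) (esym hq)).
Qed.

Lemma Dl_uniq j k f q : j != k -> (X j - X k) * q = f - sw j k f -> Dl j k f = q.
Proof. by move=> jk h; rewrite DlE; apply: exdivP => //; exact: XsubX_neq0. Qed.

Lemma DlD j k f g : j != k -> Dl j k (f + g) = Dl j k f + Dl j k g.
Proof. by move=> jk; apply: Dl_uniq => //; rewrite mulrDr !DlP // swD; ring. Qed.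
Lemma DlZ j k c f : j != k -> Dl j k (c *: f) = c *: Dl j k f.
Proof. by move=> jk; apply: Dl_uniq => //; rewrite -scalerAr DlP // swZ scalerBr. Qed.
Lemma Dl0 j k : j != k -> Dl j k 0 = 0.
Proof. by move=> jk; apply: Dl_uniq => //; rewrite sw0 subrr mulr0. Qed.

Lemma Dl_Xo j k l f : j != k -> l != j -> l != k -> Dl j k (X l * f) = X l * Dl j k f.
Proof.
move=> jk lj lk; apply: Dl_uniq => //.
rewrite swM sw_X tpermD 1?eq_sym //.
have := DlP f jk => h; rewrite mulrCA h; ring.
Qed.

Lemma Dl_Xj j k f : j != k -> Dl j k (X j * f) = X j * Dl j k f + sw j k f.
Proof.
move=> jk; apply: Dl_uniq => //.
rewrite swM sw_X tpermL mulrDr mulrCA DlP //; ring.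
Qed.

Lemma Dl_Xk j k f : j != k -> Dl j k (X k * f) = X k * Dl j k f - sw j k f.
Proof.
move=> jk; apply: Dl_uniq => //.
rewrite swM sw_X tpermR mulrBr mulrCA DlP //; ring.
Qed.

Lemma Dl_sw a b j k f : j != k -> sw a b (Dl j k f) = Dl (tperm a b j) (tperm a b k) (sw a b f).
Proof.
move=> jk; have jk' : tperm a b j != tperm a b k by rewrite (inj_eq perm_inj).
symmetry; apply: Dl_uniq => //.
by rewrite -!sw_X -swB -swM DlP // swB swJ.
Qed.


Lemma mderivXi j i : mderiv j (X i) = (i == j)%:R%:MP.
Proof.
rewrite mderivX mnm1E; case: eqP => [->|_].
  have -> : (U_(j) - U_(j) = 0)%MM by apply/mnmP => l; rewrite mnmBE subnn mnmE.
  by rewrite mpolyX0 scale1r mpolyC1.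
by rewrite scale0r mpolyC0.
Qed.

Lemma mderiv_sw a b j (f : P) : sw a b (mderiv j f) = mderiv (tperm a b j) (sw a b f).
Proof.
move: f; apply: gen_ind.
- by move=> c; rewrite mderivC sw_C mderivC sw0.
- by move=> i; rewrite mderivXi sw_X mderivXi sw_C (inj_eq perm_inj).
- by move=> p q hp hq; rewrite mderivD !swD hp hq mderivD.
- by move=> p q hp hq; rewrite mderivM swD !swM hp hq mderivM.
Qed.

Lemma AD j f g : A j (f + g) = A j f + A j g.
Proof.
rewrite !DAE mderivD.
have -> : \sum_(k < N | k != j) Dl j k (f + g) =
   \sum_(k < N | k != j) Dl j k f + \sum_(k < N | k != j) Dl j k g.
  by rewrite -big_split; apply: eq_bigr => k kj; rewrite DlD // eq_sym.
rewrite scalerDr.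
have H : forall (V : comRingType) (a b c d : V), a + b + (c + d) = a + c + (b + d)
  by move=> *; ring.
apply: H.
Qed.

Lemma AZ j c f : A j (c *: f) = c *: A j f.
Proof.
rewrite !DAE mderivZ.
have -> : \sum_(k < N | k != j) Dl j k (c *: f) = c *: \sum_(k < N | k != j) Dl j k f.
  by rewrite scaler_sumr; apply: eq_bigr => k kj; rewrite DlZ // eq_sym.
by rewrite scalerDr !scalerA mulrC.
Qed.

Lemma A0 j : A j 0 = 0.
Proof. by have := AZ j 0 0; rewrite !scale0r. Qed.
Lemma AN j f : A j (- f) = - A j f.
Proof. by rewrite -scaleN1r AZ scaleN1r. Qed.
Lemma AB j f g : A j (f - g) = A j f - A j g.
Proof. by rewrite AD AN. Qed.
Lemma A_sum j (I : Type) (r : seq I) (Pr : pred I) (F : I -> P) :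
  A j (\sum_(i <- r | Pr i) F i) = \sum_(i <- r | Pr i) A j (F i).
Proof.
elim: r => [|x r ih]; first by rewrite !big_nil A0.
by rewrite !big_cons; case: (Pr x) => //; rewrite AD ih.
Qed.

Lemma A_sumo j (Pr : pred 'I_N) (F : 'I_N -> P) :
  A j (\sum_(k < N | Pr k) F k) = \sum_(k < N | Pr k) A j (F k).
Proof. exact: A_sum. Qed.

Lemma A1 j : A j 1 = 0.
Proof.
rewrite DAE -mpolyC1 mderivC add0r big1 ?scaler0 // => k kj.
by apply: Dl_uniq; rewrite 1?eq_sym // sw_C subrr mulr0.
Qed.

Lemma A_sw a b j f : sw a b (A j f) = A (tperm a b j) (sw a b f).
Proof.
rewrite !DAE swD swZ mderiv_sw sw_sum; congr (_ + _ *: _).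
rewrite [RHS](reindex_inj (@perm_inj _ (tperm a b))) /=.
apply: eq_big => [k|k kj]; first by rewrite (inj_eq perm_inj).
by rewrite Dl_sw // eq_sym.
Qed.

Lemma SE j f : S j f = \sum_(k < N | k != j) sw j k f.
Proof. by rewrite /S unlock. Qed.

Lemma A_X j i f : A j (X i * f) =
  X i * A j f + (if i == j then f + beta%:R *: S j f else - (beta%:R *: sw j i f)).
Proof.
rewrite !DAE mderivM mderivXi.
case: eqP => [->|/eqP ij].
  have -> : \sum_(k < N | k != j) Dl j k (X j * f) =
            X j * \sum_(k < N | k != j) Dl j k f + S j f.
    by rewrite SE mulr_sumr -big_split; apply: eq_bigr => k kj /=; rewrite Dl_Xj // eq_sym.
  rewrite mulr1n mpolyC1 mul1r scalerDr mulrDr -scalerAr.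
  have H : forall (V : comRingType) (a b c d : V), a + b + (c + d) = b + c + (a + d)
    by move=> *; ring.
  apply: H.
have -> : \sum_(k < N | k != j) Dl j k (X i * f) =
          X i * \sum_(k < N | k != j) Dl j k f - sw j i f.
  rewrite (bigD1 i) //= [in RHS](bigD1 i) //= Dl_Xk; last by rewrite eq_sym.
  have -> : \sum_(k < N | (k != j) && (k != i)) Dl j k (X i * f) =
            X i * \sum_(k < N | (k != j) && (k != i)) Dl j k f.
    rewrite mulr_sumr; apply: eq_bigr => k /andP [kj ki].
    by rewrite Dl_Xo //; rewrite eq_sym.
  have H : forall (V : comRingType) (x a b c : V), x * a - b + x * c = x * (a + c) - b
    by move=> *; ring.
  apply: H.
rewrite mulr0n mpolyC0 mul0r add0r.
by rewrite scalerBr mulrDr -scalerAr addrA.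
Qed.


Definition K : 'I_N -> 'I_N -> P -> P := locked_with lock_key (fun j i f =>
  if i == j then f + beta%:R *: S j f else - (beta%:R *: sw j i f)).

Lemma KE j i f : K j i f = if i == j then f + beta%:R *: S j f else - (beta%:R *: sw j i f).
Proof. by rewrite /K unlock. Qed.
Lemma A_XK j i f : A j (X i * f) = X i * A j f + K j i f.
Proof. by rewrite A_X KE. Qed.

Lemma SD j f g : S j (f + g) = S j f + S j g.
Proof. by rewrite !SE -big_split; apply: eq_bigr => k _; rewrite swD. Qed.
Lemma SZ j c f : S j (c *: f) = c *: S j f.
Proof. by rewrite !SE scaler_sumr; apply: eq_bigr => k _; rewrite swZ. Qed.
Lemma SN j f : S j (- f) = - S j f.
Proof. by rewrite -scaleN1r SZ scaleN1r. Qed.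
Lemma SB j f g : S j (f - g) = S j f - S j g.
Proof. by rewrite SD SN. Qed.

Lemma KD j i f g : K j i (f + g) = K j i f + K j i g.
Proof.
rewrite !KE; case: eqP => _; rewrite ?SD ?swD scalerDr; first by rewrite addrACA.
by rewrite opprD.
Qed.
Lemma KZ j i c f : K j i (c *: f) = c *: K j i f.
Proof.
rewrite !KE; case: eqP => _; rewrite ?SZ ?swZ.
  by rewrite scalerDr !scalerA mulrC.
by rewrite scalerN !scalerA mulrC.
Qed.

Lemma lin_zero (T : P -> P) :
  (forall f g, T (f + g) = T f + T g) -> (forall c f, T (c *: f) = c *: T f) ->
  (forall k g, T (X k * g) = X k * T g) -> T 1 = 0 -> forall f, T f = 0.
Proof.
move=> TD TZ TX T1 f.
suff h : forall p g, T (p * g) = p * T g by rewrite -[f]mulr1 h T1 mulr0.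
apply: gen_ind.
- by move=> c g; rewrite !mul_mpolyC TZ.
- by move=> i g; rewrite TX.
- by move=> p q hp hq g; rewrite mulrDl TD hp hq mulrDl.
- by move=> p q hp hq g; rewrite -mulrA hp hq mulrA.
Qed.

Definition Cm : 'I_N -> 'I_N -> P -> P := locked_with lock_key (fun i j f => A i (A j f) - A j (A i f)).
Lemma CmE i j f : Cm i j f = A i (A j f) - A j (A i f).
Proof. by rewrite /Cm unlock. Qed.

Lemma Cm_expand i j k f : Cm i j (X k * f) = X k * Cm i j f +
  (K i k (A j f) + A i (K j k f) - K j k (A i f) - A j (K i k f)).
Proof.
rewrite !CmE !A_XK !AD !A_XK.
have H : forall (V : comRingType) (x a b c d e g : V),
  x * a + b + c - (x * d + e + g) = x * (a - d) + (b + c - e - g).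
  by move=> *; ring.
apply: H.
Qed.

Lemma A_swD a b j f : j != a -> j != b -> sw a b (A j f) = A j (sw a b f).
Proof. by move=> ja jb; rewrite A_sw tpermD // eq_sym. Qed.

Lemma CmX_o i j k f : k != i -> k != j -> i != j -> Cm i j (X k * f) = X k * Cm i j f.
Proof.
move=> ki kj ij; rewrite Cm_expand !KE (negbTE ki) (negbTE kj).
have e1 : sw i k (A j f) = A j (sw i k f).
  apply: A_swD. by rewrite eq_sym. by rewrite eq_sym.
have e2 : sw j k (A i f) = A i (sw j k f).
  apply: A_swD. by []. by rewrite eq_sym.
rewrite e1 e2 (AN i) (AZ i) (AN j) (AZ j).
have H : forall (V : comRingType) (x a b : V), x + (- a - b - - b - - a) = x.
  by move=> V x a b; ring.
apply: H.
Qed.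

Lemma SA i j (f : P) : i != j -> S i (A j f) = A i (sw i j f) - A j (sw i j f) + A j (S i f).
Proof.
move=> ij; rewrite !SE A_sumo (bigD1 j) /=; last by rewrite eq_sym.
rewrite [in RHS](bigD1 j) /=; last by rewrite eq_sym.
rewrite A_sw tpermR.
have -> : \sum_(l < N | (l != i) && (l != j)) sw i l (A j f) =
          \sum_(l < N | (l != i) && (l != j)) A j (sw i l f).
  apply: eq_bigr => l /andP [li lj]; rewrite A_sw tpermD //; by rewrite eq_sym.
have H : forall (V : comRingType) (a b c : V), a + c = a - b + (b + c) by move=> *; ring.
apply: H.
Qed.

Lemma CmX_i i j (f : P) : i != j -> Cm i j (X i * f) = X i * Cm i j f.
Proof.
move=> ij; rewrite Cm_expand !KE eqxx (negbTE ij).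
rewrite (AD j) (AZ j) (AN i) (AZ i) A_sw tpermR (SA _ ij) !(swC j i).
rewrite scalerDr scalerBr.
have H : forall (V : comRingType) (x y a b c : V),
  x + (y + (a - b + c) - a - - b - (y + c)) = x by move=> *; ring.
apply: H.
Qed.

Lemma CmN i j (f : P) : Cm i j f = - Cm j i f.
Proof. by rewrite !CmE opprB. Qed.

Lemma CmX i j k (f : P) : Cm i j (X k * f) = X k * Cm i j f.
Proof.
case: (eqVneq i j) => [->|ij]; first by rewrite !CmE !subrr mulr0.
case: (eqVneq k i) => [->|ki]; first exact: CmX_i.
case: (eqVneq k j) => [->|kj]; last exact: CmX_o.
by rewrite CmN CmX_i 1?eq_sym // CmN mulrN opprK.
Qed.

Lemma CmD i j (f g : P) : Cm i j (f + g) = Cm i j f + Cm i j g.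
Proof. rewrite !CmE !AD; by rewrite opprD addrACA. Qed.
Lemma CmZ i j c (f : P) : Cm i j (c *: f) = c *: Cm i j f.
Proof. by rewrite !CmE !AZ scalerBr. Qed.
Lemma Cm1 i j : Cm i j 1 = 0.
Proof. by rewrite CmE !A1 !A0 subrr. Qed.

Lemma A_comm i j (f : P) : A i (A j f) = A j (A i f).
Proof.
apply/eqP; rewrite -subr_eq0 -CmE; apply/eqP.
move: f; apply: lin_zero.
- exact: CmD.
- exact: CmZ.
- exact: CmX.
- exact: Cm1.
Qed.


Definition cc : C := locked_with lock_key ((1 + 2%:R * gamma) / 2%:R).
Lemma ccE : cc = (1 + 2%:R * gamma) / 2%:R.
Proof. by rewrite /cc unlock. Qed.

Definition Lj : 'I_N -> P -> P := locked_with lock_key (fun j f =>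
  cc *: A j f + X j * A j (A j f) + beta%:R *: S j (A j f)).
Lemma LjE j f : Lj j f = cc *: A j f + X j * A j (A j f) + beta%:R *: S j (A j f).
Proof. by rewrite /Lj unlock. Qed.
Definition L : P -> P := locked_with lock_key (fun f => \sum_(j < N) Lj j f).
Lemma LE f : L f = \sum_(j < N) Lj j f.
Proof. by rewrite /L unlock. Qed.
Definition G : 'I_N -> P -> P := locked_with lock_key (fun j f =>
  cc *: f + 2%:R *: (X j * A j f) + beta%:R *: S j f).
Lemma GE j f : G j f = cc *: f + 2%:R *: (X j * A j f) + beta%:R *: S j f.
Proof. by rewrite /G unlock. Qed.

Lemma S_sw a b m g : sw a b (S m g) = S (tperm a b m) (sw a b g).
Proof.
rewrite !SE sw_sum [RHS](reindex_inj (@perm_inj _ (tperm a b))) /=.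
apply: eq_big => [k|k _]; first by rewrite (inj_eq perm_inj).
by rewrite swJ.
Qed.

Lemma swXm a b m (g : P) : sw a b (X m * g) = X (tperm a b m) * sw a b g.
Proof. by rewrite swM sw_X. Qed.

Lemma S0 j : S j 0 = 0.
Proof. by rewrite SE big1 // => k _; rewrite sw0. Qed.

Lemma LjD j f g : Lj j (f + g) = Lj j f + Lj j g.
Proof.
rewrite !LjE !AD !SD !scalerDr mulrDr.
have H : forall (V : comRingType) (a b c d e g : V), a + b + (c + d) + (e + g) =
  a + c + e + (b + d + g) by move=> *; ring.
apply: H.
Qed.

Lemma LjZ j a f : Lj j (a *: f) = a *: Lj j f.
Proof.
rewrite !LjE !AZ !SZ !scalerDr -!scalerAr !scalerA.
by rewrite (mulrC cc) (mulrC beta%:R).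
Qed.

Lemma LD f g : L (f + g) = L f + L g.
Proof. by rewrite !LE -big_split; apply: eq_bigr => j _; rewrite LjD. Qed.
Lemma LZ a f : L (a *: f) = a *: L f.
Proof. by rewrite !LE scaler_sumr; apply: eq_bigr => j _; rewrite LjZ. Qed.
Lemma L0 : L 0 = 0.
Proof. by have := LZ 0 0; rewrite !scale0r. Qed.
Lemma LN f : L (- f) = - L f.
Proof. by rewrite -scaleN1r LZ scaleN1r. Qed.
Lemma LB f g : L (f - g) = L f - L g.
Proof. by rewrite LD LN. Qed.
Lemma L_sumo (Pr : pred 'I_N) (F : 'I_N -> P) :
  L (\sum_(k < N | Pr k) F k) = \sum_(k < N | Pr k) L (F k).
Proof.
elim: (index_enum _) => [|x r ih]; first by rewrite !big_nil L0.
by rewrite !big_cons; case: (Pr x) => //; rewrite LD ih.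
Qed.

Lemma L1 : L 1 = 0.
Proof.
rewrite LE big1 // => j _; by rewrite LjE !A1 !A0 S0 mulr0 !scaler0 !addr0.
Qed.

Lemma Lj_sw a b m f : sw a b (Lj m f) = Lj (tperm a b m) (sw a b f).
Proof. by rewrite !LjE !swD !swZ swXm !A_sw S_sw A_sw. Qed.

Lemma L_sw a b f : L (sw a b f) = sw a b (L f).
Proof.
rewrite !LE sw_sum [RHS](reindex_inj (@perm_inj _ (tperm a b))) /=.
by apply: eq_bigr => k _; rewrite Lj_sw tpermK.
Qed.


Lemma LjE' j f : Lj j f = A j (X j * A j f) + (cc - 1) *: A j f.
Proof.
rewrite LjE A_XK KE eqxx scalerBl scale1r.
have H : forall (V : comRingType) (p q r s : V), p + q + r = q + (s + r) + (p - s)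
  by move=> *; ring.
apply: H.
Qed.

Lemma LjA k i f : Lj k (A i f) = A i (Lj k f) - A k (K i k (A k f)).
Proof.
have e : A i (A k (X k * A k f)) = A k (X k * A k (A i f)) + A k (K i k (A k f)).
  by rewrite A_comm A_XK AD (A_comm i k).
rewrite !LjE' AD AZ e (A_comm i k).
have H : forall (V : comRingType) (a b c : V), a + c = a + b + c - b
  by move=> *; ring.
apply: H.
Qed.

Lemma LA i f : L (A i f) = A i (L f) - A i (A i f).
Proof.
rewrite !LE A_sumo.
have -> : \sum_(k < N) Lj k (A i f) = \sum_(k < N) (A i (Lj k f) - A k (K i k (A k f))).
  by apply: eq_bigr => k _; exact: LjA.
rewrite sumrB; congr (_ - _).
have T : forall k, k != i -> A k (K i k (A k f)) = - (beta%:R *: A i (sw i k (A i f))).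
  move=> k ki; rewrite KE (negbTE ki) AN AZ.
  by rewrite (A_sw i k k f) tpermR (A_sw i k i f) tpermL A_comm.
rewrite (bigD1 i) //= KE eqxx AD AZ SE A_sumo.
have -> : \sum_(k < N | k != i) A k (K i k (A k f)) =
          \sum_(k < N | k != i) - (beta%:R *: A i (sw i k (A i f))).
  by apply: eq_bigr => k ki; exact: T.
by rewrite sumrN -scaler_sumr addrK.
Qed.


Lemma mpCD (a b : C) : (a + b)%:MP = a%:MP + b%:MP :> P.
Proof. exact: mpolyCD. Qed.
Lemma mpCB (a b : C) : (a - b)%:MP = a%:MP - b%:MP :> P.
Proof. exact: mpolyCB. Qed.
Lemma mpCM (a b : C) : (a * b)%:MP = a%:MP * b%:MP :> P.
Proof. exact: mpolyCM. Qed.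

Lemma LjX j i f : Lj j (X i * f) - X i * Lj j f =
  K j i (X j * A j f) + A j (X j * K j i f) + (cc - 1) *: K j i f.
Proof.
have e2 : A j (X j * (X i * A j f + K j i f)) =
          X i * A j (X j * A j f) + K j i (X j * A j f) + A j (X j * K j i f).
  by rewrite mulrDr AD mulrCA (A_XK j i).
rewrite !LjE' (A_XK j i f) e2 scalerDr mulrDr -scalerAr.
have H : forall (V : comRingType) (x k1 a2 s t : V),
  x + k1 + a2 + (s + t) - (x + s) = k1 + a2 + t by move=> *; ring.
apply: H.
Qed.

Lemma LjX_ne j i f : j != i -> Lj j (X i * f) - X i * Lj j f =
  - (beta%:R *: (X i * A i (sw i j f))) - beta%:R *: (X j * A j (sw i j f))
  - (beta%:R * cc) *: sw i j f - (beta%:R * beta%:R) *: S j (sw i j f).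
Proof.
move=> ji; have ij : (i == j) = false by rewrite eq_sym (negbTE ji).
rewrite LjX !KE ij.
rewrite swXm tpermL (A_sw j i j) tpermL.
rewrite mulrN AN -scalerAr AZ A_XK KE eqxx.
rewrite !(swC j i).
rewrite -!mul_mpolyC !mpCM mpCB mpolyC1.
have H : forall (V : comRingType) (b c x y u v w z : V),
  - (b * (x * u)) - b * (y * v + (w + b * z)) + (c - 1) * - (b * w) =
  - (b * (x * u)) - b * (y * v) - b * c * w - b * b * z by move=> *; ring.
apply: H.
Qed.


Lemma LjX_eq i f : Lj i (X i * f) - X i * Lj i f =
  2%:R *: (X i * A i f) + cc *: f
  + beta%:R *: (\sum_(k < N | k != i) X k * A k (sw i k f))
  + beta%:R *: (X i * \sum_(k < N | k != i) A i (sw i k f))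
  + (beta%:R * (cc + 1)) *: S i f + (beta%:R * beta%:R) *: S i (S i f).
Proof.
have e1 : S i (X i * A i f) = \sum_(k < N | k != i) X k * A k (sw i k f).
  by rewrite SE; apply: eq_bigr => k _; rewrite swXm tpermL A_sw tpermL.
have e2 : A i (S i f) = \sum_(k < N | k != i) A i (sw i k f) by rewrite SE A_sumo.
rewrite LjX !KE eqxx (A_XK i i) KE eqxx AD AZ SD SZ e1 e2.
move: (\sum_(k < N | k != i) X k * A k (sw i k f)) (\sum_(k < N | k != i) A i (sw i k f)) => s1 s2.
rewrite -!mul_mpolyC !mpCM mpCB mpCD !mpolyC1 mpolyC_nat.
ring.
Qed.


Lemma SS i f : S i (S i f) = \sum_(j < N | j != i) S j (sw i j f).
Proof. by rewrite [LHS]SE; apply: eq_bigr => j _; rewrite S_sw tpermL. Qed.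

Lemma LX i f : L (X i * f) = X i * L f + G i f.
Proof.
rewrite -[L (X i * f)](subrK (X i * L f)) addrC; congr (_ + _).
have -> : L (X i * f) - X i * L f = \sum_(j < N) (Lj j (X i * f) - X i * Lj j f).
  by rewrite !LE mulr_sumr sumrB.
rewrite (bigD1 i) //= LjX_eq.
have -> : \sum_(j < N | j != i) (Lj j (X i * f) - X i * Lj j f) =
  \sum_(j < N | j != i) (- (beta%:R *: (X i * A i (sw i j f))) - beta%:R *: (X j * A j (sw i j f))
  - (beta%:R * cc) *: sw i j f - (beta%:R * beta%:R) *: S j (sw i j f)).
  by apply: eq_bigr => j ji; rewrite LjX_ne.
rewrite !sumrB sumrN -!scaler_sumr -mulr_sumr -SS -SE GE.
rewrite -!mul_mpolyC !mpCM mpCD !mpolyC1 mpolyC_nat.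
ring.
Qed.


Lemma LS i f : L (S i f) = S i (L f).
Proof. by rewrite !SE L_sumo; apply: eq_bigr => k _; rewrite L_sw. Qed.

Lemma LXA i f : L (X i * A i f) = X i * A i (L f) + Lj i f.
Proof. rewrite LX LA GE LjE -!mul_mpolyC mpolyC_nat; ring. Qed.

Lemma LG i f : L (G i f) = G i (L f) + 2%:R *: Lj i f.
Proof.
rewrite !GE !LD !LZ LXA LS -!mul_mpolyC mpolyC_nat; ring.
Qed.

Lemma LLj i f : L (Lj i f) = Lj i (L f).
Proof.
rewrite [Lj i f]LjE !LD !LZ LXA !LA LS LA !AB SB [Lj i (A i f)]LjE [Lj i (L f)]LjE.
rewrite -!mul_mpolyC; ring.
Qed.


Lemma msize_le_add (p q : P) d : (msize p <= d)%N -> (msize q <= d)%N -> (msize (p + q) <= d)%N.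
Proof.
move=> /msize_leP hp /msize_leP hq; apply/msize_leP => m hm.
by rewrite mcoeffD hp // hq // addr0.
Qed.
Lemma msize_le_opp (p : P) d : (msize p <= d)%N -> (msize (- p) <= d)%N.
Proof.
move=> /msize_leP hp; apply/msize_leP => m hm; by rewrite mcoeffN hp // oppr0.
Qed.
Lemma msize_le_scale (p : P) c d : (msize p <= d)%N -> (msize (c *: p) <= d)%N.
Proof.
move=> /msize_leP hp; apply/msize_leP => m hm; by rewrite mcoeffZ hp // mulr0.
Qed.
Lemma msize_le_sum d (Pr : pred 'I_N) (F : 'I_N -> P) :
  (forall k, Pr k -> (msize (F k) <= d)%N) -> (msize (\sum_(k < N | Pr k) F k) <= d)%N.
Proof.
move=> h; apply: (big_ind (fun p : P => (msize p <= d)%N)) => //.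
- by rewrite msize0.
- by move=> p q; apply: msize_le_add.
Qed.
Lemma msize_le_mono (p : P) d e : (d <= e)%N -> (msize p <= d)%N -> (msize p <= e)%N.
Proof. by move=> de h; apply: leq_trans h de. Qed.

Lemma msize_sw a b (g : P) d : (msize g <= d)%N -> (msize (sw a b g) <= d)%N.
Proof.
move=> /msize_leP h; apply/msize_leP => m hm; rewrite /sw mcoeff_sym; apply: h.
by rewrite mdeg_mperm.
Qed.

Lemma msize_deriv j (g : P) d : (msize g <= d.+1)%N -> (msize (mderiv j g) <= d)%N.
Proof.
move=> /msize_leP h; apply/msize_leP => m hm; rewrite mcoeff_mderiv h ?mul0rn //.
by rewrite mdegD mdeg1 addn1.
Qed.

Lemma msizeXi j : msize (X j) = 2.
Proof. by rewrite msizeX mdeg1. Qed.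

Lemma msize_mulX j (g : P) d : (msize g <= d)%N -> (msize (X j * g) <= d.+1)%N.
Proof.
move=> h; case: (eqVneq g 0) => [->|gn0]; first by rewrite mulr0 msize0.
by rewrite msizeM ?X_neq0 // msizeXi.
Qed.

Lemma msize_Dl j k (g : P) d : j != k -> (msize g <= d.+1)%N -> (msize (Dl j k g) <= d)%N.
Proof.
move=> jk h; case: (eqVneq (Dl j k g) 0) => [->|qn0]; first by rewrite msize0.
have h2 : (msize (g - sw j k g) <= d.+1)%N.
  by apply: msize_le_add => //; apply: msize_le_opp; apply: msize_sw.
rewrite -(DlP g jk) msizeM ?XsubX_neq0 // in h2.
have h3 : (1 < msize (X j - X k))%N.
  have : U_(j)%MM \in msupp (X j - X k).
    by rewrite mcoeff_msupp mcoeffB !mcoeffXU eqxx (eq_sym k j) (negbTE jk) subr0 oner_eq0.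
  by move/msize_mdeg_lt; rewrite mdeg1.
move: h2 h3; case: (msize (X j - X k)) => [|[|a]] //= h2 _.
rewrite !addSn /= ltnS in h2; exact: leq_trans (leq_addl _ _) h2.
Qed.

Lemma msize_A j (g : P) d : (msize g <= d.+1)%N -> (msize (A j g) <= d)%N.
Proof.
move=> h; rewrite DAE; apply: msize_le_add; first exact: msize_deriv.
apply: msize_le_scale; apply: msize_le_sum => k kj; apply: msize_Dl => //.
by rewrite eq_sym.
Qed.

Lemma msize_S j (g : P) d : (msize g <= d)%N -> (msize (S j g) <= d)%N.
Proof. move=> h; rewrite SE; apply: msize_le_sum => k _; exact: msize_sw. Qed.

Lemma msize_Lj j (g : P) d : (msize g <= d.+1)%N -> (msize (Lj j g) <= d)%N.
Proof.
move=> h; have hA := msize_A j h.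
case: d h hA => [|d] h hA.
  have h0 : A j g = 0 by apply: msize0_eq0.
  by rewrite LjE h0 A0 S0 mulr0 !scaler0 !addr0 msize0.
rewrite LjE; apply: msize_le_add; first apply: msize_le_add.
- exact: msize_le_scale.
- by apply: msize_mulX; apply: msize_A.
- by apply: msize_le_scale; apply: msize_S.
Qed.

Lemma msize_L (g : P) d : (msize g <= d.+1)%N -> (msize (L g) <= d)%N.
Proof. move=> h; rewrite LE; apply: msize_le_sum => k _; exact: msize_Lj. Qed.


Lemma fsum_nat (F : P -> P) (h : nat -> P) K :
  (forall f g, F (f + g) = F f + F g) -> F 0 = 0 ->
  F (\sum_(0 <= n < K) h n) = \sum_(0 <= n < K) F (h n).
Proof.
move=> FD F0; elim: K => [|K ih]; first by rewrite !big_geq.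
by rewrite !big_nat_recr //= FD ih.
Qed.

Lemma fact_neq0 n : (n`!%:R : C) != 0.
Proof. by rewrite pnatr_eq0 -lt0n fact_gt0. Qed.

Section Exp.
Variable T : P -> P.
Hypothesis TD : forall f g, T (f + g) = T f + T g.
Hypothesis TZ : forall c f, T (c *: f) = c *: T f.
Hypothesis Tlow : forall g d, (msize g <= d.+1)%N -> (msize (T g) <= d)%N.

Lemma T0 : T 0 = 0.
Proof. by have := TZ 0 0; rewrite !scale0r. Qed.

Lemma iter_T0 n : iter n T 0 = 0.
Proof. by elim: n => //= n ->; rewrite T0. Qed.

Lemma iter_msize_le n f : (msize (iter n T f) <= msize f - n)%N.
Proof.
elim: n => [|n ih]; first by rewrite subn0.
rewrite iterS subnS; move: ih; case: (msize f - n)%N => [|k] ih /=.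
  by rewrite (msize0_eq0 ih) T0 msize0.
exact: Tlow.
Qed.

Lemma iter_msize n f : (msize f <= n)%N -> iter n T f = 0.
Proof.
move=> h; apply: msize0_eq0; have := iter_msize_le n f.
by have -> : (msize f - n = 0)%N by apply/eqP; rewrite subn_eq0.
Qed.

Definition Esum K f := \sum_(0 <= n < K) (n`!%:R)^-1 *: iter n T f.
Definition Ex f := Esum (msize f) f.

Lemma Esum_stable K f : (msize f <= K)%N -> Esum K f = Ex f.
Proof.
move=> h; rewrite /Ex /Esum; move: h; rewrite leq_eqVlt => /orP [/eqP -> //|].
elim: K => [|K ih] //; rewrite ltnS leq_eqVlt => /orP [/eqP e|hK].
  by rewrite big_nat_recr //= -e iter_msize // scaler0 addr0.
rewrite big_nat_recr //= ih // iter_msize ?scaler0 ?addr0 //; exact: ltnW.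
Qed.

Lemma EsumD K f g : Esum K (f + g) = Esum K f + Esum K g.
Proof.
rewrite /Esum -big_split; apply: eq_bigr => n _ /=.
have -> : iter n T (f + g) = iter n T f + iter n T g.
  by elim: n => //= n ->; rewrite TD.
by rewrite scalerDr.
Qed.

Lemma EsumZ K c f : Esum K (c *: f) = c *: Esum K f.
Proof.
rewrite /Esum scaler_sumr; apply: eq_bigr => n _ /=.
have -> : iter n T (c *: f) = c *: iter n T f by elim: n => //= n ->; rewrite TZ.
by rewrite !scalerA mulrC.
Qed.

Lemma ExD f g : Ex (f + g) = Ex f + Ex g.
Proof.
set K := (msize (f + g) + msize f + msize g)%N.
have h1 : (msize (f + g) <= K)%N by rewrite /K; lia.
have h2 : (msize f <= K)%N by rewrite /K; lia.
have h3 : (msize g <= K)%N by rewrite /K; lia.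
by rewrite -(Esum_stable h1) EsumD (Esum_stable h2) (Esum_stable h3).
Qed.

Lemma ExZ c f : Ex (c *: f) = c *: Ex f.
Proof.
set K := (msize (c *: f) + msize f)%N.
have h1 : (msize (c *: f) <= K)%N by rewrite /K; lia.
have h2 : (msize f <= K)%N by rewrite /K; lia.
by rewrite -(Esum_stable h1) EsumZ (Esum_stable h2).
Qed.

Lemma cS n : ((n.+1)`!%:R)^-1 * (n.+1)%:R = (n`!%:R)^-1 :> C.
Proof.
rewrite factS natrM invfM mulrAC mulVf ?mul1r //.
by rewrite pnatr_eq0.
Qed.

Lemma cSS n : ((n.+2)`!%:R)^-1 * ('C(n.+2, 2))%:R = 2%:R^-1 * (n`!%:R)^-1 :> C.
Proof.
have hb : ('C(n.+2, 2) * 2)%N = (n.+2 * n.+1)%N.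
  by have := bin_ffact n.+2 2; rewrite ffactSS ffactn1.
have hC : ('C(n.+2, 2))%:R = (n.+2 * n.+1)%:R / 2%:R :> C.
  rewrite -hb natrM mulfK //; by rewrite pnatr_eq0.
rewrite hC !factS !natrM.
have h1 : (n.+2%:R : C) != 0 by rewrite pnatr_eq0.
have h2 : (n.+1%:R : C) != 0 by rewrite pnatr_eq0.
have h3 := fact_neq0 n.
have h4 : (2%:R : C) != 0 by rewrite pnatr_eq0.
field. apply/and3P; split => //; [rewrite -(@natrD C 1 n) | rewrite -(@natrD C 2 n)]; by rewrite pnatr_eq0.
Qed.

Section Conj.
Variables Xo Y Z : P -> P.
Hypothesis XoD : forall f g, Xo (f + g) = Xo f + Xo g.
Hypothesis XoZ : forall c f, Xo (c *: f) = c *: Xo f.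
Hypothesis YD : forall f g, Y (f + g) = Y f + Y g.
Hypothesis YZ : forall c f, Y (c *: f) = c *: Y f.
Hypothesis ZD : forall f g, Z (f + g) = Z f + Z g.
Hypothesis ZZ : forall c f, Z (c *: f) = c *: Z f.
Hypothesis TX : forall g, T (Xo g) = Xo (T g) + Y g.
Hypothesis TY : forall g, T (Y g) = Y (T g) + Z g.
Hypothesis TZr : forall g, T (Z g) = Z (T g).

Lemma iterX n f : iter n T (Xo f) =
  Xo (iter n T f) + n%:R *: Y (iter n.-1 T f) + ('C(n, 2))%:R *: Z (iter n.-2 T f).
Proof.
elim: n => [|n IH]; first by rewrite /= !scale0r !addr0.
rewrite iterS IH !TD !TZ TX TY TZr.
case: n IH => [|[|m]] IH /=.
- rewrite ?(@bin_small 0 2) ?(@bin_small 1 2) // -!mul_mpolyC !mpolyC_nat; ring.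
- rewrite ?(@bin_small 0 2) ?(@bin_small 1 2) // -!mul_mpolyC !mpolyC_nat; ring.
- have eb : 'C(m.+3, 2) = ('C(m.+2, 2) + m.+2)%N by rewrite binS bin1.
  rewrite eb natrD -!mul_mpolyC ?mpCD !mpolyC_nat; ring.
Qed.

Lemma Ex_conj f : Ex (Xo f) = Xo (Ex f) + Y (Ex f) + 2%:R^-1 *: Z (Ex f).
Proof.
set K := (msize (Xo f) + msize f).+2.
have hK1 : (msize (Xo f) <= K)%N by rewrite /K; lia.
have hK2 : (msize f <= (msize (Xo f) + msize f).+2)%N by lia.
have hK3 : (msize f <= (msize (Xo f) + msize f).+1)%N by lia.
have hK4 : (msize f <= (msize (Xo f) + msize f))%N by lia.
rewrite -(Esum_stable hK1) /Esum.
under eq_bigr => n _ do rewrite iterX !scalerDr.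
rewrite !big_split /=.
have e1 : \sum_(0 <= i < K) (i`!%:R)^-1 *: Xo (iter i T f) = Xo (Ex f).
  rewrite -(Esum_stable hK2) /Esum fsum_nat //; last first.
    by have := XoZ 0 0; rewrite !scale0r.
  by apply: eq_bigr => n _; rewrite XoZ.
have e2 : \sum_(0 <= i < K) (i`!%:R)^-1 *: (i%:R *: Y (iter i.-1 T f)) = Y (Ex f).
  rewrite /K big_nat_recl // /= scale0r scaler0 add0r.
  rewrite -(Esum_stable hK3) /Esum fsum_nat //; last first.
    by have := YZ 0 0; rewrite !scale0r.
  by apply: eq_bigr => n _; rewrite YZ scalerA cS.
have e3 : \sum_(0 <= i < K) (i`!%:R)^-1 *: (('C(i, 2))%:R *: Z (iter i.-2 T f)) =
          2%:R^-1 *: Z (Ex f).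
  rewrite /K big_nat_recl // big_nat_recl // /= !scale0r !scaler0 !add0r.
  rewrite -(Esum_stable hK4) /Esum fsum_nat //; last first.
    by have := ZZ 0 0; rewrite !scale0r.
  rewrite scaler_sumr; apply: eq_bigr => n _; by rewrite ZZ !scalerA cSS.
by rewrite e1 e2 e3.
Qed.

End Conj.

End Exp.


Definition Tm (f : P) : P := - L f.
Lemma TmD f g : Tm (f + g) = Tm f + Tm g.
Proof. by rewrite /Tm LD opprD. Qed.
Lemma TmZ c f : Tm (c *: f) = c *: Tm f.
Proof. by rewrite /Tm LZ scalerN. Qed.
Lemma Tmlow g d : (msize g <= d.+1)%N -> (msize (Tm g) <= d)%N.
Proof. by move=> h; apply: msize_le_opp; apply: msize_L. Qed.

Definition E (f : P) : P := Ex Tm f.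

Lemma ED f g : E (f + g) = E f + E g.
Proof. rewrite /E; apply: ExD; first [exact: TmD | exact: TmZ | exact: Tmlow]. Qed.
Lemma EZ c f : E (c *: f) = c *: E f.
Proof. rewrite /E; apply: ExZ; first [exact: TmD | exact: TmZ | exact: Tmlow]. Qed.
Lemma E0 : E 0 = 0.
Proof. by have := EZ 0 0; rewrite !scale0r. Qed.

Lemma E1 : E 1 = 1.
Proof.
rewrite /E /Ex /Esum msize1 big_nat_recr //= big_geq // add0r.
by rewrite invr1 scale1r.
Qed.

Lemma GD j f g : G j (f + g) = G j f + G j g.
Proof. rewrite !GE AD SD mulrDr !scalerDr; ring. Qed.
Lemma GZ j c f : G j (c *: f) = c *: G j f.
Proof.
rewrite !GE AZ SZ -!scalerAr !scalerDr !scalerA (mulrC cc) (mulrC 2%:R) (mulrC beta%:R).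
done.
Qed.

Lemma GN j f : G j (- f) = - G j f.
Proof. by rewrite -scaleN1r GZ scaleN1r. Qed.
Lemma LjN j f : Lj j (- f) = - Lj j f.
Proof. by rewrite -scaleN1r LjZ scaleN1r. Qed.

Definition Bop (i : 'I_N) (g : P) : P := X i * g - G i g + Lj i g.

Lemma E_X i f : E (X i * f) = Bop i (E f).
Proof.
have h1 : forall f1 g1 : P, X i * (f1 + g1) = X i * f1 + X i * g1 by move=> *; rewrite mulrDr.
have h2 : forall c (f1 : P), X i * (c *: f1) = c *: (X i * f1) by move=> *; rewrite scalerAr.
have h3 : forall f1 g1, - G i (f1 + g1) = - G i f1 + - G i g1 by move=> *; rewrite GD opprD.
have h4 : forall c f1, - G i (c *: f1) = c *: - G i f1 by move=> *; rewrite GZ scalerN.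
have h5 : forall f1 g1, 2%:R *: Lj i (f1 + g1) = 2%:R *: Lj i f1 + 2%:R *: Lj i g1.
  by move=> *; rewrite LjD scalerDr.
have h6 : forall c f1, 2%:R *: Lj i (c *: f1) = c *: (2%:R *: Lj i f1).
  by move=> *; rewrite LjZ !scalerA mulrC.
have h7 : forall g, Tm (X i * g) = X i * Tm g + - G i g.
  by move=> g; rewrite /Tm LX opprD mulrN.
have h8 : forall g, Tm (- G i g) = - G i (Tm g) + 2%:R *: Lj i g.
  by move=> g; rewrite /Tm LN opprK LG GN opprK.
have h9 : forall g, Tm (2%:R *: Lj i g) = 2%:R *: Lj i (Tm g).
  by move=> g; rewrite /Tm LZ LLj LjN scalerN.
rewrite /E (@Ex_conj Tm TmD TmZ Tmlow (fun g => X i * g) (fun g => - G i g)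
  (fun g => 2%:R *: Lj i g) h1 h2 h3 h4 h5 h6 h7 h8 h9 f).
by rewrite /Bop scalerA mulVf ?scale1r // pnatr_eq0.
Qed.


Lemma E_XA i f : E (X i * A i f) = X i * A i (E f) - Lj i (E f).
Proof.
have h1 : forall f1 g1 : P, X i * A i (f1 + g1) = X i * A i f1 + X i * A i g1.
  by move=> *; rewrite AD mulrDr.
have h2 : forall c (f1 : P), X i * A i (c *: f1) = c *: (X i * A i f1).
  by move=> *; rewrite AZ scalerAr.
have h3 : forall f1 g1 : P, - Lj i (f1 + g1) = - Lj i f1 + - Lj i g1.
  by move=> *; rewrite LjD opprD.
have h4 : forall c (f1 : P), - Lj i (c *: f1) = c *: - Lj i f1.
  by move=> *; rewrite LjZ scalerN.
have h5 : forall f1 g1 : P, (0 : P) = 0 + 0 by move=> *; rewrite addr0.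
have h6 : forall (c : C) (f1 : P), (0 : P) = c *: 0 by move=> *; rewrite scaler0.
have h7 : forall g, Tm (X i * A i g) = X i * A i (Tm g) + - Lj i g.
  by move=> g; rewrite /Tm LXA opprD AN mulrN.
have h8 : forall g, Tm (- Lj i g) = - Lj i (Tm g) + 0.
  by move=> g; rewrite /Tm LN opprK LLj LjN opprK addr0.
have h9 : forall g : P, Tm 0 = 0 by move=> g; rewrite /Tm L0 oppr0.
rewrite /E (@Ex_conj Tm TmD TmZ Tmlow (fun g => X i * A i g) (fun g => - Lj i g)
  (fun g => 0) h1 h2 h3 h4 h5 h6 h7 h8 h9 f).
by rewrite scaler0 addr0.
Qed.

Lemma E_sw a b f : E (sw a b f) = sw a b (E f).
Proof.
have h1 : forall f1 g1 : P, sw a b (f1 + g1) = sw a b f1 + sw a b g1 by move=> *; exact: swD.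
have h2 : forall c (f1 : P), sw a b (c *: f1) = c *: sw a b f1 by move=> *; exact: swZ.
have h5 : forall f1 g1 : P, (0 : P) = 0 + 0 by move=> *; rewrite addr0.
have h6 : forall (c : C) (f1 : P), (0 : P) = c *: 0 by move=> *; rewrite scaler0.
have h7 : forall g, Tm (sw a b g) = sw a b (Tm g) + 0.
  by move=> g; rewrite /Tm L_sw swN addr0.
have h8 : forall g : P, Tm 0 = 0 + 0 by move=> g; rewrite /Tm L0 oppr0 addr0.
have h9 : forall g : P, Tm 0 = 0 by move=> g; rewrite /Tm L0 oppr0.
rewrite /E (@Ex_conj Tm TmD TmZ Tmlow (sw a b) (fun g => 0)
  (fun g => 0) h1 h2 h5 h6 h5 h6 h7 h8 h9 f).
by rewrite scaler0 !addr0.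
Qed.


Lemma mderiv_phi j g : mderiv j (phi g) = 2%:R *: (X j * phi (mderiv j g)).
Proof.
move: g; apply: gen_ind.
- by move=> c; rewrite phi_C !mderivC phi0 mulr0 scaler0.
- move=> i; rewrite phi_X mderivXi phi_C expr2 mderivM mderivXi.
  case: eqP => [->|_] /=; rewrite -!mul_mpolyC ?mpolyC_nat; ring.
- by move=> p q hp hq; rewrite phiD !mderivD hp hq phiD mulrDr scalerDr.
- move=> p q hp hq; rewrite phiM !mderivM hp hq phiD !phiM -!mul_mpolyC mpolyC_nat; ring.
Qed.

Lemma DBE j f : DB beta gamma j f = mderiv j f
  + beta%:R *: \sum_(k < N | k != j)
       (exdiv (X j - X k) (f - sw j k f)
        + exdiv (X j + X k) (f - tflip j (tflip k (sw j k f))))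
  + gamma *: exdiv (X j) (f - tflip j f).
Proof. by []. Qed.

Lemma tflipN j (p : P) : tflip j (- p) = - tflip j p.
Proof. exact: comp_mpolyN. Qed.

Lemma phi_Dl j k u : j != k ->
  phi u = phi (sw j k u) + (X j ^+ 2 - X k ^+ 2) * phi (Dl j k u).
Proof.
move=> jk; have h := congr1 phi (DlP u jk).
rewrite phiM phiB !phi_X phiB in h.
rewrite h; ring.
Qed.

Lemma DB_phi j g : DB beta gamma j (phi g) = 2%:R *: (X j * phi (A j g)).
Proof.
rewrite DBE.
have e0 : exdiv (X j) (phi g - tflip j (phi g)) = 0.
  by rewrite tflip_phi subrr; apply: exdivP; [exact: X_neq0 | rewrite mulr0].
have ek : forall k, k != j ->
    exdiv (X j - X k) (phi g - sw j k (phi g))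
  + exdiv (X j + X k) (phi g - tflip j (tflip k (sw j k (phi g))))
  = 2%:R *: (X j * phi (Dl j k g)).
  move=> k kj; have jk : j != k by rewrite eq_sym.
  have hg := phi_Dl g jk.
  rewrite sw_phi !tflip_phi.
  rewrite (@exdivP _ _ ((X j + X k) * phi (Dl j k g))) ?XsubX_neq0 //; last first.
    by rewrite [phi g]hg; ring.
  rewrite (@exdivP _ _ ((X j - X k) * phi (Dl j k g))) ?XaddX_neq0 //; last first.
    by rewrite [phi g]hg; ring.
  rewrite -mul_mpolyC mpolyC_nat; ring.
have -> : \sum_(k < N | k != j)
    (exdiv (X j - X k) (phi g - sw j k (phi g))
     + exdiv (X j + X k) (phi g - tflip j (tflip k (sw j k (phi g)))))
  = \sum_(k < N | k != j) 2%:R *: (X j * phi (Dl j k g)).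
  by apply: eq_bigr => k kj; exact: ek.
rewrite e0 scaler0 addr0 -scaler_sumr -mulr_sumr DAE phiD phiZ phi_sumo mderiv_phi.
rewrite -!mul_mpolyC !mpolyC_nat; ring.
Qed.


Lemma two_cc : 2%:R * cc = 1 + 2%:R * gamma.
Proof.
rewrite ccE mulrC -mulrA mulVf ?mulr1 //; by rewrite pnatr_eq0.
Qed.

Lemma gam (p : P) : gamma *: (2%:R *: p) = 2%:R *: (cc *: p) - p.
Proof.
rewrite !scalerA two_cc scalerDl scale1r mulrC addrAC subrr add0r; done.
Qed.

Lemma DB_Xphi j u : DB beta gamma j (X j * phi u) =
  2%:R *: phi (cc *: u + X j * A j u + beta%:R *: S j u).
Proof.
rewrite DBE.
have e0 : exdiv (X j) (X j * phi u - tflip j (X j * phi u)) = 2%:R *: phi u.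
  apply: exdivP; first exact: X_neq0.
  rewrite tflipM tflip_X eqxx tflip_phi -mul_mpolyC mpolyC_nat; ring.
have ek : forall k, k != j ->
    exdiv (X j - X k) (X j * phi u - sw j k (X j * phi u))
  + exdiv (X j + X k) (X j * phi u - tflip j (tflip k (sw j k (X j * phi u))))
  = 2%:R *: (X j ^+ 2 * phi (Dl j k u)) + 2%:R *: phi (sw j k u).
  move=> k kj; have jk : j != k by rewrite eq_sym.
  have hu := phi_Dl u jk.
  have ek' : tflip j (X k) = X k by rewrite tflip_X (negbTE kj).
  rewrite swM sw_X tpermL sw_phi !tflipM !tflip_phi tflip_X eqxx tflipN ek'.
  rewrite (@exdivP _ _ (X j * (X j + X k) * phi (Dl j k u) + phi (sw j k u)))
    ?XsubX_neq0 //; last first.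
    by rewrite [phi u]hu; ring.
  rewrite (@exdivP _ _ (X j * (X j - X k) * phi (Dl j k u) + phi (sw j k u)))
    ?XaddX_neq0 //; last first.
    by rewrite [phi u]hu; ring.
  rewrite -!mul_mpolyC mpolyC_nat; ring.
have -> : \sum_(k < N | k != j)
    (exdiv (X j - X k) (X j * phi u - sw j k (X j * phi u))
     + exdiv (X j + X k) (X j * phi u - tflip j (tflip k (sw j k (X j * phi u)))))
  = \sum_(k < N | k != j) (2%:R *: (X j ^+ 2 * phi (Dl j k u)) + 2%:R *: phi (sw j k u)).
  by apply: eq_bigr => k kj; exact: ek.
rewrite e0 gam big_split /= -!scaler_sumr -mulr_sumr.
rewrite mderivM mderivXi eqxx /= mderiv_phi.
rewrite !phiD !phiZ phiM phi_X DAE phiD phiZ phi_sumo SE phi_sumo.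
rewrite -!mul_mpolyC !mpolyC_nat; ring.
Qed.


Definition rr : C := (sqrtC 2%:R)^-1.
Lemma rr2 : (2%:R * rr) * (2%:R * rr) = 2%:R :> C.
Proof.
have h2 : (2%:R : C) != 0 by rewrite pnatr_eq0.
have e : sqrtC (2%:R : C) * sqrtC 2%:R = 2%:R by rewrite -expr2 sqrtCK.
rewrite /rr mulrACA -invfM e mulfK //.
Qed.

Definition Mop (j : 'I_N) (u : P) : P :=
  X j * u - cc *: u - X j * A j u - beta%:R *: S j u.

Lemma MopZ j c u : Mop j (c *: u) = c *: Mop j u.
Proof.
rewrite /Mop AZ SZ !scalerBr -!scalerAr !scalerA (mulrC cc) (mulrC beta%:R); done.
Qed.

Lemma bdagE j f : bdag beta gamma j f = rr *: (- DB beta gamma j f + 2%:R *: (X j * f)).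
Proof. by []. Qed.
Lemma bannE (j : 'I_N) (f : P) : bann beta gamma j f = rr *: DB beta gamma j f.
Proof. by []. Qed.

Lemma bdag_phi j g : bdag beta gamma j (phi g) = (2%:R * rr) *: (X j * phi (g - A j g)).
Proof. rewrite bdagE DB_phi phiB -!mul_mpolyC mpCM !mpolyC_nat; ring. Qed.

Lemma bdag_Xphi j u : bdag beta gamma j (X j * phi u) = (2%:R * rr) *: phi (Mop j u).
Proof.
rewrite bdagE DB_Xphi /Mop !phiB !phiD ?phiN !phiZ !phiM phi_X.
rewrite -!mul_mpolyC mpCM !mpolyC_nat; ring.
Qed.

Lemma Mop_B j g : Mop j (g - A j g) = Bop j g.
Proof.
rewrite /Mop /Bop GE LjE AB SB -!mul_mpolyC !mpolyC_nat; ring.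
Qed.

Lemma Mop_A j g : Mop j (A j g) = X j * A j g - Lj j g.
Proof. rewrite /Mop LjE -!mul_mpolyC; ring. Qed.

Lemma bdag2half_phi j g : bdag2half beta gamma j (phi g) = phi (Bop j g).
Proof.
rewrite /bdag2half bdag_phi scalerAr -phiZ bdag_Xphi MopZ phiZ !scalerA.
by rewrite -mulrA rr2 mulVf ?scale1r ?Mop_B // pnatr_eq0.
Qed.

Lemma hB_phi j g : 2%:R^-1 *: hB beta gamma j (phi g) =
  phi (Mop j (A j g) + beta%:R *: \sum_(k < N | (k < j)%N) sw j k g).
Proof.
rewrite /hB bannE DB_phi scalerA (mulrC rr) scalerAr -phiZ bdag_Xphi MopZ phiZ scalerA rr2.
have -> : \sum_(k < N | (k < j)%N) (sw j k (phi g) + tflip j (tflip k (sw j k (phi g))))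
        = 2%:R *: \sum_(k < N | (k < j)%N) phi (sw j k g).
  rewrite scaler_sumr; apply: eq_bigr => k _; rewrite sw_phi !tflip_phi.
  by rewrite -mul_mpolyC mpolyC_nat; ring.
rewrite phiD phiZ phi_sumo scalerA mulrC -scalerA -scalerDr scalerA mulVf ?scale1r //.
by rewrite pnatr_eq0.
Qed.


Lemma fsum_seq (F : P -> P) (I : Type) (r : seq I) (G : I -> P) :
  (forall f g, F (f + g) = F f + F g) -> F 0 = 0 ->
  F (\sum_(i <- r) G i) = \sum_(i <- r) F (G i).
Proof.
move=> FD F0; elim: r => [|x r ih]; first by rewrite !big_nil.
by rewrite !big_cons FD ih.
Qed.

Lemma E_sumo (Pr : pred 'I_N) (F : 'I_N -> P) :
  E (\sum_(k < N | Pr k) F k) = \sum_(k < N | Pr k) E (F k).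
Proof.
elim: (index_enum _) => [|x r ih]; first by rewrite !big_nil E0.
by rewrite !big_cons; case: (Pr x) => //; rewrite ED ih.
Qed.

Lemma iter_b2h j n h : iter n (bdag2half beta gamma j) (phi (E h)) = phi (E (X j ^+ n * h)).
Proof.
elim: n => [|n ih] /=; first by rewrite expr0 mul1r.
by rewrite ih bdag2half_phi -E_X exprS mulrA.
Qed.

Lemma mono_phiE m (l : seq 'I_N) g :
  foldr (fun j acc => iter (m j) (bdag2half beta gamma j) acc) (phi (E g)) l
  = phi (E ((\prod_(j <- l) X j ^+ m j) * g)).
Proof.
elim: l => [|j l IH] /=; first by rewrite big_nil mul1r.
by rewrite IH iter_b2h big_cons mulrA.
Qed.

Lemma mono_op_E m : mono_op beta gamma m 1 = phi (E 'X_[m]).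
Proof.
rewrite /mono_op -{1}phi1 -{1}E1 mono_phiE mulr1 mpolyXE_id.
congr (phi (E _)); rewrite enumT; done.
Qed.

Lemma sigmaB_E f : sigmaB beta gamma f = phi (E f).
Proof.
rewrite /sigmaB [in RHS](mpolyE f) (fsum_seq (F := fun p => phi (E p))).
- by apply: eq_bigr => m _; rewrite mono_op_E EZ phiZ.
- by move=> p q; rewrite ED phiD.
- by rewrite E0 phi0.
Qed.

Lemma main_ind (Q : H0expr C N) f :
  phi (E (actA beta Q f)) = rhoB beta gamma Q (phi (E f)).
Proof.
elim: Q f => [j|i j||a IHa b IHb|c a IHa|a IHa b IHb] f /=.
- rewrite hB_phi Mop_A /hatDA -A_unlock ED EZ E_XA E_sumo.
  congr (phi (_ + _ *: _)); apply: eq_bigr => k _; exact: E_sw.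
- by rewrite E_sw sw_phi.
- by [].
- by rewrite ED phiD IHa IHb.
- by rewrite EZ phiZ IHa.
- by rewrite IHa IHb.
Qed.

End Work.

Unset Implicit Arguments.
Set Strict Implicit.

Theorem theorem2p9 (C : numClosedFieldType) (N : nat) (beta : nat) (gamma : C) :
  (0 < N)%N ->
  forall (Q : H0expr C N) (f : {mpoly C[N]}),
    sigmaB beta gamma (actA beta Q f) = rhoB beta gamma Q (sigmaB beta gamma f).
Proof.
move=> _ Q f; rewrite !sigmaB_E; exact: main_ind.
Qed.
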